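(* Let $k\geq 0$ and \[F_k(x)=\sum_{l=0}^{k}B_{k-l}(x^{k+2})(x^{k+2}-1)^l\sum_{i=l}^{k}\binom{i}{l}x^{k+1-i}.\] For $0\le i\le k+1$ and $0\le j\le k+1$ let $f_k(i,j)$ denote the coefficient of $x^{(k+2)i+j}$ in $F_k(x)$. Then $f_k(i,0)=0$ for $0\leq i\leq k+1$, and $f_k(i,j+1)=t_k(i,j)$ for $0\leq i\leq k+1$ and $0\leq j\leq k$.
   Context: $B_n(y)=\sum_{\pi\in B_n}y^{\mathrm{des}_B(\pi)}$ is the type $B$ Eulerian polynomial: $B_n$ is the set of signed permutations $\pi_1\cdots\pi_n$ of $[n]$, and with $\pi_0=0$, $\mathrm{des}_B(\pi)$ counts $i\in\{0,\dots,n-1\}$ with $\pi_i>\pi_{i+1}$; $B_0=1$. Define \[\widetilde T_k(x)=\sum_{l=0}^{k}B_{k-l}(x^{k+1})(x^{k+1}-1)^l\sum_{i=l}^{k}\binom{i}{l}x^{k-i},\] and for $0\le i\le k+1$, $0\le j\le k$ let $t_k(i,j)$ be the coefficient of $x^{(k+1)i+j}$ in $\widetilde T_k(x)$. *)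

(* Defs.v *)
From mathcomp Require Import all_boot all_order all_algebra all_fingroup.
Set Implicit Arguments. Unset Strict Implicit. Unset Printing Implicit Defensive.
Import Order.TTheory GRing.Theory Num.Theory.
Local Open Scope ring_scope.

(* A signed permutation of [n] is a pair (sigma, eps) with sigma : 'S_n and
   eps : 'I_n -> bool (true = negative sign).  Its one-line notation is
   pi_1 ... pi_n with pi_{j+1} = (-1)^{eps j} * (sigma j + 1). *)
Definition signed_perm (n : nat) := ('S_n * {ffun 'I_n -> bool})%type.

Definition sp_val n (s : signed_perm n) (j : 'I_n) : int :=
  (if s.2 j then -1 else 1) * ((s.1 j).+1 : int).

Definition sp_word n (s : signed_perm n) : seq int :=
  0 :: [seq sp_val s j | j <- enum 'I_n].

Definition desB n (s : signed_perm n) : nat :=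
  #|[set i : 'I_n | nth 0 (sp_word s) i.+1 < nth 0 (sp_word s) i]|.

Definition Bpoly (n : nat) : {poly int} :=
  \sum_(s : signed_perm n) 'X^(desB s).

Definition Ttilde (k : nat) : {poly int} :=
  \sum_(l < k.+1)
    (Bpoly (k - l)%N \Po 'X^(k.+1)) * ('X^(k.+1) - 1) ^+ l *
    \sum_(l <= i < k.+1) ('C(i, l))%:R * 'X^(k - i)%N.

Definition tk (k i j : nat) : int := (Ttilde k)`_(k.+1 * i + j).

Definition Fk (k : nat) : {poly int} :=
  \sum_(l < k.+1)
    (Bpoly (k - l)%N \Po 'X^(k.+2)) * ('X^(k.+2) - 1) ^+ l *
    \sum_(l <= i < k.+1) ('C(i, l))%:R * 'X^(k.+1 - i)%N.

Definition fk (k i j : nat) : int := (Fk k)`_(k.+2 * i + j).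

(* Main.v *)
Require Import Defs.
From mathcomp Require Import all_boot all_order all_algebra all_fingroup.
From mathcomp Require Import zify.
Import GRing.Theory.
Local Open Scope ring_scope.

Lemma key (R : nzSemiRingType) (P Q : {poly R}) n m j :
  (forall t, (n <= t)%N -> Q`_t = 0) -> (j < n)%N ->
  ((P \Po 'X^n) * Q)`_(n * m + j) = P`_m * Q`_j.
Proof.
move=> HQ Hj.
rewrite comp_polyE mulr_suml coef_sum.
under eq_bigr => i _ do rewrite -scalerAl coefZ -exprM coefXnM.
have Z : forall i : 'I_(size P), (i : nat) != m ->
  P`_i * (if (n * m + j < n * i)%N then 0 else Q`_(n * m + j - n * i)) = 0.
  move=> i Him; case: ifP => H; first by rewrite mulr0.
  rewrite HQ ?mulr0 //.
  have : (i < m)%N by move/negbT: H; move/eqP: Him; nia.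
  nia.
case: (ltnP m (size P)) => Hm.
  rewrite (bigD1 (Ordinal Hm)) //= big1; last by move=> i; apply: Z.
  by rewrite addr0 ifF ?addKn //; nia.
rewrite nth_default // mul0r big1 // => i _; apply: Z.
by apply/eqP => E; move: (ltn_ord i); rewrite E; lia.
Qed.

Lemma sumR_coef k l t : (k.+1 <= t)%N ->
  (\sum_(l <= i < k.+1) ('C(i, l))%:R * 'X^(k - i)%N : {poly int})`_t = 0.
Proof.
move=> Ht; rewrite coef_sum big_nat big1 // => i /andP[_ Hi].
rewrite mulr_natl coefMn coefXn; case: eqP => [E|_]; [lia | by rewrite mul0rn].
Qed.

Lemma sumF k l :
  (\sum_(l <= i < k.+1) ('C(i, l))%:R * 'X^(k.+1 - i)%N : {poly int}) =
  'X * \sum_(l <= i < k.+1) ('C(i, l))%:R * 'X^(k - i)%N.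
Proof.
rewrite mulr_sumr big_nat [RHS]big_nat; apply: eq_bigr => i /andP[_ Hi].
by rewrite mulrCA -exprS subSn.
Qed.

Lemma combine (B Q : {poly int}) n l :
  (B \Po 'X^n) * ('X^n - 1) ^+ l * Q = ((B * ('X - 1) ^+ l) \Po 'X^n) * Q.
Proof.
rewrite comp_polyM; congr (_ * _ * _).
elim: l => [|l IH]; first by rewrite !expr0 comp_polyC.
by rewrite !exprS comp_polyM IH comp_polyB comp_polyX comp_polyC.
Qed.

Theorem lemma3p2 (k : nat) :
  (forall i : nat, (i <= k.+1)%N -> fk k i 0 = 0) /\
  (forall i j : nat, (i <= k.+1)%N -> (j <= k)%N -> fk k i j.+1 = tk k i j).
Proof.
have HX : forall l t, (k.+2 <= t)%N ->
   ('X * \sum_(l <= i < k.+1) ('C(i, l))%:R * 'X^(k - i)%N : {poly int})`_t = 0.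
  move=> l t Ht; rewrite coefXM ifF; last by apply/eqP; lia.
  by apply: sumR_coef; lia.
split.
  move=> i _; rewrite /fk /Fk coef_sum big1 // => l _.
  rewrite sumF combine key //; last by move=> t; apply: HX.
  by rewrite coefXM eqxx mulr0.
move=> i j _ Hj; rewrite /fk /tk /Fk /Ttilde !coef_sum; apply: eq_bigr => l _.
rewrite sumF !combine (key _ _ _ k.+2) //; last by move=> t; apply: HX.
rewrite (key _ _ _ k.+1) //; last by move=> t; apply: sumR_coef.
by rewrite coefXM.
Qed.
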